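(* Let $F$ be a finite abelian group. Then: (i) $A_F(G_F)\subseteq C_F:=\big\{|F|-4k\mid k=0,\ldots,\lfloor |F|/2\rfloor\big\}^F\cap\mathbb R^F_{\rm ev}$, and $|F|\,\mathbf 1_F\in A_F(G_F)$, where $\mathbf 1_F$ is the constant function $1$; (ii) in general $A_F(G_F)$ is not a convex subset of $C_F$: there exists a finite abelian group $F$ for which $A_F(G_F)$ is not convex; (iii) for every $g\in\mathrm{Aut}(F)$ one has $A_F\circ\Psi^{(G)}_g=\Psi^{(\rm ev)}_g\circ A_F$, and $A_F(G_F)$ is invariant under $\Psi^{(\rm ev)}_g$.
   Context: $F$ is a finite abelian group (additive), $G_F=\{-1,1\}^F$, and $A_F:G_F\to\mathbb Z^F$ is $A_F(\sigma)_f=\sum_{\ell\in F}\sigma_\ell\sigma_{\ell+f}$. $\mathbb R^F_{\rm ev}=\{h\in\mathbb R^F: h_{-f}=h_f\ \forall f\}$. A subset $S\subseteq C_F$ is called convex if whenever $s_0,s_1\in S$, $t\in(0,1)$ and $s_t:=(1-t)s_0+ts_1\in C_F$, then $s_t\in S$. For $g\in\mathrm{Aut}(F)$ define $\Psi^{(G)}_g:G_F\to G_F$, $\Psi^{(G)}_g(\sigma)_f=\sigma_{g^{-1}(f)}$, and $\Psi^{(\rm ev)}_g:\mathbb R^F_{\rm ev}\to\mathbb R^F_{\rm ev}$, $\Psi^{(\rm ev)}_g(h)_f=h_{g^{-1}(f)}$. *)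

(* Defs.v *)
From HB Require Import structures.
From mathcomp Require Import all_boot all_order all_algebra all_fingroup.
From mathcomp Require Import reals.
Set Implicit Arguments. Unset Strict Implicit. Unset Printing Implicit Defensive.
Import Order.TTheory GRing.Theory Num.Theory.
Local Open Scope ring_scope.

Section Defs.
Variable F : finZmodType.

Definition isSign (s : F -> int) : Prop := forall l : F, s l = 1 \/ s l = -1.

Definition AF (s : F -> int) (f : F) : int := \sum_(l : F) s l * s (l + f).

Variable R : realType.

Definition AFimg : (F -> R) -> Prop :=
  fun h => exists s, isSign s /\ h = (fun f => (AF s f)%:~R).

Definition isEven (h : F -> R) : Prop := forall f : F, h (- f) = h f.

Definition CF (h : F -> R) : Prop :=
  (forall f : F, exists k : nat, (k <= #|F|./2)%N /\ h f = #|F|%:R - 4 * k%:R)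
  /\ isEven h.

Definition convexC (S : (F -> R) -> Prop) : Prop :=
  forall (s0 s1 : F -> R) (t : R), S s0 -> S s1 -> 0 < t < 1 ->
    CF (fun f => (1 - t) * s0 f + t * s1 f) ->
    S (fun f => (1 - t) * s0 f + t * s1 f).

Definition isAut (g : {perm F}) : Prop := forall x y : F, g (x + y) = g x + g y.

(* Psi_g(sigma)_f = sigma_(g^-1 f); used both for Psi^(G) and Psi^(ev) *)
Definition Psi (T : Type) (g : {perm F}) (s : F -> T) : F -> T :=
  fun f => s ((g^-1)%g f).

End Defs.

(* Main.v *)
Require Import Defs.
From HB Require Import structures.
From mathcomp Require Import all_boot all_order all_algebra all_fingroup.
From mathcomp Require Import reals.
From Stdlib Require Import FunctionalExtensionality.
From mathcomp Require Import zify lra.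
Import Order.TTheory GRing.Theory Num.Theory.
Local Open Scope ring_scope.

Lemma AF_even (F : finZmodType) (s : F -> int) f : AF s (- f) = AF s f.
Proof.
rewrite /AF (reindex_inj (can_inj (addrK f))) /=.
by apply: eq_bigr => l _; rewrite addrK mulrC.
Qed.

Lemma sign_sq (F : finZmodType) (s : F -> int) l : isSign s -> s l * s l = 1.
Proof. by move=> Hs; case: (Hs l) => ->. Qed.

Lemma AF_form (F : finZmodType) (s : F -> int) f : isSign s ->
  exists k : nat, (k <= #|F|./2)%N /\ AF s f = #|F|%:Z - 4 * k%:Z.
Proof.
move=> Hs.
pose b l : nat := (s l * s (l + f) == -1).
have Hp l : s l * s (l + f) = (-1) ^+ b l.
  by rewrite /b; case: (Hs l) => ->; case: (Hs (l + f)) => ->.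
have Hq l : s l * s (l + f) = 1 - 2 * (b l)%:Z.
  by rewrite /b; case: (Hs l) => ->; case: (Hs (l + f)) => ->.
set n := (\sum_l b l)%N.
have Hprod : (-1) ^+ n = 1 :> int.
  rewrite /n -prodrXr -(eq_bigr _ (fun l _ => Hp l)) big_split /=.
  have -> : \prod_l s (l + f) = \prod_l s l.
    by symmetry; apply: (reindex_inj (can_inj (addrK f))).
  by rewrite -big_split /= big1 // => l _; apply: sign_sq.
have Hodd : ~~ odd n.
  apply/negP => Ho; move: Hprod; rewrite -signr_odd Ho /=.
  by move/eqP.
have Hn : (n <= #|F|)%N.
  rewrite /n -sum1_card; apply: leq_sum => l _; by rewrite /b; case: (_ == _).
exists n./2; split; first exact: half_leq.
have Hsum : AF s f = #|F|%:Z - 2 * n%:Z.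
  rewrite /AF (eq_bigr _ (fun l _ => Hq l)) sumrB sumr_const -mulr_sumr.
  rewrite -(natz (\sum_l b l)%N) natr_sum -natz; congr (_ - 2 * _); by apply: eq_bigr => i _; rewrite natz.
rewrite Hsum.
have := odd_double_half n; rewrite (negbTE Hodd) add0n => Hd.
rewrite -[in LHS]Hd. rewrite -muln2. lia.
Qed.
Lemma aut_inv (F : finZmodType) (g : {perm F}) : isAut g -> isAut (g^-1)%g.
Proof.
move=> Hg x y; apply: (@perm_inj _ g).
by rewrite Hg !permKV.
Qed.

Lemma AF_Psi (F : finZmodType) (g : {perm F}) (s : F -> int) :
  isAut g -> AF (Psi g s) = Psi g (AF s).
Proof.
move=> Hg; apply: functional_extensionality => f.
rewrite /AF /Psi (reindex_inj (@perm_inj _ g)) /=.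
by apply: eq_bigr => l _; rewrite (@aut_inv _ _ Hg) !permK.
Qed.

Lemma Psi_sign (F : finZmodType) (g : {perm F}) (s : F -> int) :
  isSign s -> isSign (Psi g s).
Proof. by move=> Hs l; apply: Hs. Qed.

Lemma AFimg_Psi (F : finZmodType) (R : realType) (g : {perm F}) (h : F -> R) :
  isAut g -> AFimg h -> AFimg (Psi g h).
Proof.
move=> Hg [s [Hs ->]]; exists (Psi g s); split; first exact: Psi_sign.
by rewrite (@AF_Psi _ g s Hg).
Qed.

Lemma part1 (R : realType) (F : finZmodType) :
     ((forall h : F -> R, AFimg h -> CF h)
      /\ AFimg (fun _ : F => (#|F|%:R : R))).
Proof.
split.
  move=> h [s [Hs ->]]; split.
    move=> f; have [k [Hk ->]] := @AF_form _ s f Hs; exists k; split => //.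
    by rewrite intrD intrN intrM !pmulrn.
  by move=> f; rewrite AF_even.
exists (fun _ => 1); split; first by move=> l; left.
apply: functional_extensionality => f.
rewrite /AF (eq_bigr (fun _ => 1)) ?sumr_const ?intr_nat ?mulr1 // natz pmulrn; congr (_%:R); apply: eq_card.
Qed.
Definition e0 : 'I_4 := @Ordinal 4 0 isT.
Definition e1 : 'I_4 := @Ordinal 4 1 isT.
Definition e2 : 'I_4 := @Ordinal 4 2 isT.
Definition e3 : 'I_4 := @Ordinal 4 3 isT.

Lemma nonimg (s : 'I_4 -> int) : isSign s -> AF s e1 = 0 -> AF s e2 = 4 -> False.
Proof.
move=> Hs.
have Hsv x : s x = nth 0 [:: s e0; s e1; s e2; s e3] x.
  case: x => [[|[|[|[|m]]]] Hm] //=; congr s; exact: val_inj.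
have HA f : AF s f = AF (fun x : 'I_4 => nth 0 [:: s e0; s e1; s e2; s e3] (val x)) f.
  by apply: eq_bigr => l _; rewrite (Hsv l) (Hsv (l + f)).
rewrite !HA.
case: (Hs e0) => ->; case: (Hs e1) => ->; case: (Hs e2) => ->; case: (Hs e3) => ->;
rewrite /AF !big_ord_recl !big_ord0 => H1 H2; vm_compute in H1; vm_compute in H2; congruence.
Qed.
Definition s0 := fun _ : 'I_4 => (1 : int).
Definition s1 := fun i : 'I_4 => if odd i then (-1 : int) else 1.

Lemma AFs0 f : AF s0 f = 4.
Proof. case: f => [[|[|[|[|m]]]] Hm] //; by rewrite /AF !big_ord_recl !big_ord0; vm_compute. Qed.
Lemma AFs1_0 : AF s1 e0 = 4. Proof. by rewrite /AF !big_ord_recl !big_ord0; vm_compute. Qed.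
Lemma AFs1_1 : AF s1 e1 = -4. Proof. by rewrite /AF !big_ord_recl !big_ord0; vm_compute. Qed.
Lemma AFs1_2 : AF s1 e2 = 4. Proof. by rewrite /AF !big_ord_recl !big_ord0; vm_compute. Qed.
Lemma AFs1_3 : AF s1 e3 = -4. Proof. by rewrite /AF !big_ord_recl !big_ord0; vm_compute. Qed.

Lemma part2 (R : realType) : ~ convexC (@AFimg 'I_4 R).
Proof.
move=> Hc.
pose h0 := fun f : 'I_4 => ((AF s0 f)%:~R : R).
pose h1 := fun f : 'I_4 => ((AF s1 f)%:~R : R).
have A0 : AFimg h0 by exists s0; split => // l; left.
have A1 : AFimg h1 by exists s1; split => // l; rewrite /s1; case: (odd _); [right|left].
have Ht : 0 < (1/2 : R) < 1.
  apply/andP; split; [by rewrite divr_gt0 | by rewrite ltr_pdivrMr // mul1r ltr1n].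
have HC : CF (fun f => (1 - 1/2) * h0 f + 1/2 * h1 f).
  split; last by move=> f; rewrite /h0 /h1 !AF_even.
  rewrite card_ord.
  case=> [[|[|[|[|m]]]] Hm] //.
  - exists 0%N; split => //; rewrite /h0 /h1 AFs0.
    have -> : Ordinal Hm = e0 by apply: val_inj.
    by rewrite AFs1_0; lra.
  - exists 1%N; split => //; rewrite /h0 /h1 AFs0.
    have -> : Ordinal Hm = e1 by apply: val_inj.
    by rewrite AFs1_1; lra.
  - exists 0%N; split => //; rewrite /h0 /h1 AFs0.
    have -> : Ordinal Hm = e2 by apply: val_inj.
    by rewrite AFs1_2; lra.
  - exists 1%N; split => //; rewrite /h0 /h1 AFs0.
    have -> : Ordinal Hm = e3 by apply: val_inj.
    by rewrite AFs1_3; lra.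
have [s [Hs Heq]] := Hc h0 h1 (1/2) A0 A1 Ht HC.
have E1 := congr1 (fun h => h e1) Heq.
have E2 := congr1 (fun h => h e2) Heq.
rewrite /= /h0 /h1 !AFs0 AFs1_1 in E1.
rewrite /= /h0 /h1 !AFs0 AFs1_2 in E2.
apply: (@nonimg s Hs).
  have : ((AF s e1)%:~R : R) = (0:int)%:~R by rewrite -E1; lra.
  by move/eqP; rewrite eqr_int => /eqP.
have : ((AF s e2)%:~R : R) = (4:int)%:~R by rewrite -E2; lra.
by move/eqP; rewrite eqr_int => /eqP.
Qed.

Theorem mainTheorem4 (R : realType) :
  (forall F : finZmodType,
     (* (i) *)
     ((forall h : F -> R, AFimg h -> CF h)
      /\ AFimg (fun _ : F => (#|F|%:R : R)))
     (* (iii) *)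
     /\ (forall g : {perm F}, isAut g ->
           (forall s : F -> int, isSign s ->
              AF (Psi g s) = Psi g (AF s))
           /\ (forall h : F -> R, AFimg h -> AFimg (Psi g h))
           /\ (forall h : F -> R, AFimg h ->
                 exists h' : F -> R, AFimg h' /\ Psi g h' = h)))
  /\
  (* (ii) *)
  (exists F : finZmodType, ~ convexC (@AFimg F R)).
Proof.
split.
  move=> F; split; first exact: part1.
  move=> g Hg; split; first by move=> s _; exact: AF_Psi.
  split; first by move=> h; exact: AFimg_Psi.
  move=> h Hh; exists (Psi (g^-1)%g h); split.
    exact: (@AFimg_Psi F R (g^-1)%g h (@aut_inv _ g Hg) Hh).
  apply: functional_extensionality => f.
  by rewrite /Psi invgK permKV.
by exists ('I_4 : finZmodType); exact: part2.
Qed.
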